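(* Let $T=(V,E)$ be a finite rooted binary tree with root $\rho$, $\Pr$ a probability distribution over a finite set of queries, and $k$ a positive integer. Consider the dynamic-programming algorithm described in the context, which fills the table $D(u,\kappa,v)$ bottom-up and then calls $\mathrm{ConstructSolution}(\rho,k,\epsilon)$. Then the set of nodes printed by this call is an optimal solution $R^*$, i.e., it maximizes the benefit $B(R)$ over all sets $R$ of non-leaf nodes of $T$ with $|R|\le k$, and $D(\rho,k,\epsilon)$ equals this optimal benefit.
   Context: Setting. $T=(V,E)$ is a finite rooted tree in which every non-leaf node $u$ has exactly two children, a left child $\ell(u)$ and a right child $r(u)$. $T(u)$ is the set of nodes of the subtree rooted at $u$ (including $u$), $A(u)$ the set of proper ancestors of $u$, and for $v\in A(u)$, $\mathrm{path}(u,v)$ the nodes strictly between $u$ and $v$. Each non-leaf node is associated with a variable of a finite set $X$; $\mathrm{vars}(u)$ is the set of variables associated with nodes of $T(u)$. Each query $q$ determines $Z_q\subseteq X$. For $R\subseteq V$, $w\in V$: $I_q(w,R)=1$ iff $w\in R$, $\mathrm{vars}(w)\subseteq Z_q$, and no $x\in A(w)\cap R$ has $\mathrm{vars}(x)\subseteq Z_q$; else $0$; $\mathbb{E}[I(w,R)]=\sum_q\Pr(q)I_q(w,R)$. Nodes have partial costs $c(x)\ge 0$; total cost $C(w)=\sum_{x\in T(w)}c(x)$. Benefit $B(R)=\sum_{w\in R}\mathbb{E}[I(w,R)]C(w)$; partial benefit $B_u(R)=\sum_{w\in R\cap T(u)}\mathbb{E}[I(w,R)]C(w)$. $\epsilon$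 is an auxiliary symbol not in $V$, $A^\epsilon(u)=A(u)\cup\{\epsilon\}$, $\mathrm{path}(u,\epsilon)=A(u)$; $\epsilon$ is regarded as belonging to every set but not counted in its size and contributing nothing, so $B_u(S\cup\{\epsilon\})=B_u(S)$. In particular $B_u(\{u,v\})=\mathbb{E}[I(u,\{u,v\})]C(u)$ and $B_u(\{u,\epsilon\})=\mathbb{E}[I(u,\{u\})]C(u)$. Algorithm. For $u\in V$, $v\in A^\epsilon(u)$ and integers $0\le\kappa\le\min\{k,|T(u)|\}$, $D(u,\kappa,v)$ is intended to be the maximum of $B_u(R)$ over sets $R$ with $|T(u)\cap R|\le\kappa$, $v\in R$, $\mathrm{path}(u,v)\cap R=\emptyset$. It is computed bottom-up as $D(u,\kappa,v)=\max\{D^{+}(u,\kappa,v),D^{-}(u,\kappa,v)\}$ where: if $u$ is a leaf, $D^{-}(u,\kappa,v)=0$ and $D^{+}(u,\kappa,v)=-\infty$ (leaves are never selected); if $u$ is not a leaf, $D^{+}(u,\kappa,v)=B_u(\{u,v\})+\max_{\kappa_\ell+\kappa_r=\kappa-1}\{D(\ell(u),\kappa_\ell,u)+D(r(u),\kappa_r,u)\}$ (and $-\infty$ if $\kappa=0$), $D^{-}(u,\kappa,v)=\max_{\kappa_\ell+\kappa_r=\kappa}\{D(\ell(u),\kappa_\ell,v)+D(r(u),\kappa_r,v)\}$, the maxima ranging over nonnegative $\kappa_\ell,\kappa_r$ for which the entries are defined. $\mathrm{ConstructSolution}(u,\kappa,v)$: if $D(u,\kappa,v)=D^{+}(u,\kappa,v)$,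 print $u$; if $\kappa=1$ return; otherwise take $(\kappa_\ell^*,\kappa_r^* )$ maximizing $D(\ell(u),\kappa_\ell,u)+D(r(u),\kappa_r,u)$ subject to $\kappa_\ell+\kappa_r=\kappa-1$ and call $\mathrm{ConstructSolution}(\ell(u),\kappa_\ell^*,u)$ and $\mathrm{ConstructSolution}(r(u),\kappa_r^*,u)$. Else take $(\kappa_\ell^*,\kappa_r^* )$ maximizing $D(\ell(u),\kappa_\ell,v)+D(r(u),\kappa_r,v)$ subject to $\kappa_\ell+\kappa_r=\kappa$ and call $\mathrm{ConstructSolution}(\ell(u),\kappa_\ell^*,v)$ and $\mathrm{ConstructSolution}(r(u),\kappa_r^*,v)$. *)

(* Defs.v *)
From HB Require Import structures.
From mathcomp Require Import all_boot all_order all_algebra.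
Set Implicit Arguments. Unset Strict Implicit. Unset Printing Implicit Defensive.
Import Order.TTheory GRing.Theory Num.Theory.
Local Open Scope ring_scope.

(* A finite rooted full binary tree.  A leaf carries its partial cost c;
   a non-leaf node carries its variable x, its partial cost c, and its
   left and right subtrees. *)
Inductive btree (X R : Type) :=
  | BLeaf of R
  | BNode of X & R & btree X R & btree X R.
Arguments BLeaf {X R}.
Arguments BNode {X R}.

(* Nodes are addressed by their path from the root: [::] is the root,
   rcons u false is the left child l(u), rcons u true the right child r(u).
   Proper ancestors of u are the proper prefixes of u; T(u) is the set of
   addresses having u as prefix. *)
Notation addr := (seq bool).

Section Defs.
Variables (R : realFieldType) (X Q : finType).
Implicit Types (s : btree X R).

Fixpoint bsize s : nat :=
  match s with BLeaf _ => 1%N | BNode _ _ l r => (bsize l + bsize r).+1 end.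
Fixpoint tvars s : {set X} :=
  match s with BLeaf _ => set0 | BNode x _ l r => x |: (tvars l :|: tvars r) end.
Fixpoint tcost s : R :=
  match s with BLeaf c => c | BNode _ c l r => c + tcost l + tcost r end.
Fixpoint costs_ge0 s : bool :=
  match s with BLeaf c => 0 <= c | BNode _ c l r => [&& 0 <= c, costs_ge0 l & costs_ge0 r] end.

Fixpoint subtree s (a : addr) : option (btree X R) :=
  match a with
  | [::] => Some s
  | b :: a' => match s with
               | BLeaf _ => None
               | BNode _ _ l r => subtree (if b then r else l) a'
               end
  end.

Definition is_internal s (a : addr) : bool :=
  if subtree s a is Some (BNode _ _ _ _) then true else false.

(* extended reals as option R, None = -infinity *)
Definition omax (a b : option R) : option R :=
  match a, b with
  | None, _ => b
  | _, None => a
  | Some x, Some y => Some (Num.max x y)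
  end.
Definition oadd (a b : option R) : option R :=
  match a, b with Some x, Some y => Some (x + y) | _, _ => None end.
Definition splitmax (F G : nat -> option R) (kap : nat) : option R :=
  \big[omax/None]_(i < kap.+1) oadd (F i) (G (kap - i)%N).

Variables (t : btree X R) (Pr : Q -> R) (Z : Q -> {set X}) (k : nat).

Definition vars (a : addr) : {set X} :=
  if subtree t a is Some s then tvars s else set0.
Definition Ctot (a : addr) : R :=
  if subtree t a is Some s then tcost s else 0.
Definition ancestors (w : addr) : seq addr := [seq take i w | i <- iota 0 (size w)].

Definition Iq (q : Q) (w : addr) (Rs : seq addr) : bool :=
  [&& w \in Rs, vars w \subset Z q &
      ~~ has (fun x => (x \in ancestors w) && (vars x \subset Z q)) Rs].
Definition EI (w : addr) (Rs : seq addr) : R := \sum_(q : Q) Pr q * (Iq q w Rs)%:R.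
Definition benefit (Rs : seq addr) : R := \sum_(w <- Rs) EI w Rs * Ctot w.
Definition pbenefit (u : addr) (Rs : seq addr) : R :=
  \sum_(w <- Rs | prefix u w) EI w Rs * Ctot w.
(* the set {v}, where epsilon (= None) is not counted *)
Definition eps_set (v : option addr) : seq addr := if v is Some v' then [:: v'] else [::].
Definition Bpair (u : addr) (v : option addr) : R := pbenefit u (u :: eps_set v).

Definition Dplus_of (Dl Dr : nat -> option addr -> option R) (u : addr)
    (v : option addr) (kap : nat) : option R :=
  if kap is kap'.+1 then
    oadd (Some (Bpair u v)) (splitmax (fun i => Dl i (Some u)) (fun i => Dr i (Some u)) kap')
  else None.
Definition Dminus_of (Dl Dr : nat -> option addr -> option R)
    (v : option addr) (kap : nat) : option R :=
  splitmax (fun i => Dl i v) (fun i => Dr i v) kap.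

(* Dt s u kap v = D(u, kap, v), where s is the subtree of t at u;
   entries outside 0 <= kap <= min{k, |T(u)|} are undefined (None, so they
   are ignored by the maxima).  For a leaf, D = max{-oo, 0} = 0. *)
Fixpoint Dt s (u : addr) (kap : nat) (v : option addr) {struct s} : option R :=
  if (kap <= minn k (bsize s))%N then
    match s with
    | BLeaf _ => omax None (Some 0)
    | BNode _ _ l r =>
        omax (Dplus_of (Dt l (rcons u false)) (Dt r (rcons u true)) u v kap)
             (Dminus_of (Dt l (rcons u false)) (Dt r (rcons u true)) v kap)
    end
  else None.

(* Construct s u kap v S : some run of ConstructSolution(u, kap, v)
   (ties in the argmax resolved arbitrarily) prints the sequence S. *)
Inductive Construct : btree X R -> addr -> nat -> option addr -> seq addr -> Prop :=
  | CLeaf c u kap v : Construct (BLeaf c) u kap v [::]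
  | CPlus1 x c l r u v :
      Dt (BNode x c l r) u 1 v = Dplus_of (Dt l (rcons u false)) (Dt r (rcons u true)) u v 1 ->
      Construct (BNode x c l r) u 1 v [:: u]
  | CPlus x c l r u kap v i Sl Sr :
      (1 < kap)%N ->
      Dt (BNode x c l r) u kap v = Dplus_of (Dt l (rcons u false)) (Dt r (rcons u true)) u v kap ->
      (i <= kap.-1)%N ->
      oadd (Dt l (rcons u false) i (Some u)) (Dt r (rcons u true) (kap.-1 - i) (Some u))
        = splitmax (fun j => Dt l (rcons u false) j (Some u))
                   (fun j => Dt r (rcons u true) j (Some u)) kap.-1 ->
      Construct l (rcons u false) i (Some u) Sl ->
      Construct r (rcons u true) (kap.-1 - i) (Some u) Sr ->
      Construct (BNode x c l r) u kap v (u :: Sl ++ Sr)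
  | CMinus x c l r u kap v i Sl Sr :
      Dt (BNode x c l r) u kap v <> Dplus_of (Dt l (rcons u false)) (Dt r (rcons u true)) u v kap ->
      (i <= kap)%N ->
      oadd (Dt l (rcons u false) i v) (Dt r (rcons u true) (kap - i) v)
        = splitmax (fun j => Dt l (rcons u false) j v)
                   (fun j => Dt r (rcons u true) j v) kap ->
      Construct l (rcons u false) i v Sl ->
      Construct r (rcons u true) (kap - i) v Sr ->
      Construct (BNode x c l r) u kap v (Sl ++ Sr).

Definition feasible (Rs : seq addr) : Prop :=
  [/\ uniq Rs, all (is_internal t) Rs & (size Rs <= k)%N].

End Defs.

(* Main.v *)
Require Import Defs.
From HB Require Import structures.
From mathcomp Require Import all_boot all_order all_algebra.
From mathcomp Require Import zify ring lra.
Import Order.TTheory GRing.Theory Num.Theory.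
Local Open Scope ring_scope.
Set Implicit Arguments. Unset Strict Implicit. Unset Printing Implicit Defensive.

Section Proof.
Variables (R : realFieldType) (X Q : finType).

Definition ole (a b : option R) : bool :=
  match a, b with None, _ => true | Some x, Some y => x <= y | Some _, None => false end.

Lemma ole_trans (a b c : option R) : ole a b -> ole b c -> ole a c.
Proof. case: a => [x|] //; case: b => [y|] //; case: c => [z|] //=; exact: le_trans. Qed.

Lemma omax_ubl (a b : option R) : ole a (omax a b).
Proof. case: a => [x|] //; case: b => [y|] //=; by rewrite le_max lexx. Qed.

Lemma omax_ubr (a b : option R) : ole b (omax a b).
Proof. case: a => [x|]; case: b => [y|] //=; by rewrite le_max lexx orbT. Qed.

Lemma omax_sel (a b : option R) : omax a b = a \/ omax a b = b.
Proof.
case: a => [x|]; case: b => [y|] /=; auto.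
rewrite /Num.max; case: ifP; auto.
Qed.

Lemma omax_some_l (x : R) (b : option R) : exists d, omax (Some x) b = Some d.
Proof. case: b => [y|] /=; eauto. Qed.

Lemma M_arg m (h : nat -> option R) :
  exists2 j, (j <= m)%N & \big[@omax R/None]_(i < m.+1) h i = h j.
Proof.
elim: m h => [|m IH] h.
  by exists 0%N => //; rewrite big_ord_recl big_ord0 /=; case: (h 0%N).
rewrite big_ord_recl /=.
have [j jm E] := IH (fun i => h i.+1).
have -> : \big[@omax R/None]_(i < m.+1) h (bump 0 i) =
          \big[@omax R/None]_(i < m.+1) h i.+1 by apply: eq_bigr.
rewrite E; case: (omax_sel (h 0%N) (h j.+1)) => ->.
- by exists 0%N.
- by exists j.+1.
Qed.

Lemma M_ub m (h : nat -> option R) j : (j <= m)%N ->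
  ole (h j) (\big[@omax R/None]_(i < m.+1) h i).
Proof.
elim: m h j => [|m IH] h j jm.
  by move: jm; rewrite leqn0 => /eqP ->; rewrite big_ord_recl big_ord0 /=; case: (h 0%N) => //= x; rewrite lexx.
rewrite big_ord_recl /=.
have -> : \big[@omax R/None]_(i < m.+1) h (bump 0 i) =
          \big[@omax R/None]_(i < m.+1) h i.+1 by apply: eq_bigr.
case: j jm => [|j] jm; first exact: omax_ubl.
exact: ole_trans (IH (fun i => h i.+1) j jm) (omax_ubr _ _).
Qed.

Lemma splitmax_arg (F G : nat -> option R) n :
  exists2 i, (i <= n)%N & oadd (F i) (G (n - i)%N) = splitmax F G n.
Proof. have [j jn E] := M_arg n (fun i => oadd (F i) (G (n - i)%N)). by exists j. Qed.

Lemma splitmax_ub (F G : nat -> option R) n i : (i <= n)%N ->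
  ole (oadd (F i) (G (n - i)%N)) (splitmax F G n).
Proof. move=> iN; exact: (M_ub (fun i => oadd (F i) (G (n - i)%N)) iN). Qed.


Lemma subtree_cat (s : btree X R) a b :
  subtree s (a ++ b) = obind (fun s' => subtree s' b) (subtree s a).
Proof. by elim: a s => [|x a IH] [c|x' c l r] //=. Qed.

Lemma subtree_nil (s : btree X R) : subtree s [::] = Some s.
Proof. by case: s. Qed.

Lemma subtree_tvars (s0 s : btree X R) a : subtree s0 a = Some s -> tvars s \subset tvars s0.
Proof.
elim: a s0 => [|b a IH] [c|x c l r] //=; try by move=> [<-]; exact: subxx.
move=> /IH H; apply: subset_trans H _; apply: subset_trans (subsetUr [set x] _).
by case: b; [apply: subsetUr | apply: subsetUl].
Qed.

Lemma subtree_costs (s0 s : btree X R) a : costs_ge0 s0 -> subtree s0 a = Some s -> costs_ge0 s.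
Proof.
elim: a s0 => [|b a IH] [c|x c l r] //=; try by move=> ? [<-].
by case/and3P=> _ Hl Hr; case: b; apply: IH.
Qed.

Lemma prefix_catl2 (u x y : addr) : prefix (u ++ x) (u ++ y) = prefix x y.
Proof. by elim: u => //= c u IH; rewrite eqxx IH. Qed.

Lemma not_prefix_rcons (u : addr) b : ~~ prefix (rcons u b) u.
Proof. by apply/negP => /size_prefix; rewrite size_rcons ltnn. Qed.

Lemma prefix_tri (u w : addr) : prefix u w ->
  ((w == u) + prefix (rcons u false) w + prefix (rcons u true) w)%N = 1%N.
Proof.
move/prefixP => [[|b a] ->].
  by rewrite cats0 eqxx (negbTE (not_prefix_rcons _ _)) (negbTE (not_prefix_rcons _ _)).
have -> : (u ++ b :: a == u) = false.
  by apply/negP => /eqP/(congr1 size); rewrite size_cat /= => /eqP; rewrite -{2}(addn0 (size u)) eqn_add2l.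
rewrite -!cats1 !prefix_catl2 !prefix_cons !prefix0s !andbT.
by case: b.
Qed.

Lemma prefix_rcons_prefix (u w : addr) b : prefix (rcons u b) w -> prefix u w.
Proof. by apply: prefix_trans; apply: prefix_rcons. Qed.

Lemma prefix_lr (u w : addr) : prefix (rcons u false) w -> prefix (rcons u true) w -> False.
Proof.
move=> Hl Hr; have := prefix_tri (prefix_rcons_prefix Hl).
by rewrite Hl Hr; case: (w == u).
Qed.

Lemma prefix_rcons_neq (u w : addr) b : prefix (rcons u b) w -> (w == u) = false.
Proof.
move=> H; have := prefix_tri (prefix_rcons_prefix H).
by case: b H => ->; case: (w == u); case: (prefix _ w).
Qed.

Lemma anc_rcons (u : addr) b : ancestors (rcons u b) = rcons (ancestors u) u.
Proof.
rewrite /ancestors size_rcons -addn1 iotaD add0n map_cat /= cats1.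
congr rcons; last by rewrite -cats1 take_size_cat.
apply/eq_in_map => i; rewrite mem_iota add0n => /andP[_ lt].
by rewrite -cats1 takel_cat // ltnW.
Qed.

Lemma anc_size (v u : addr) : v \in ancestors u -> (size v < size u)%N.
Proof. by move/mapP => [i]; rewrite mem_iota add0n => /andP[_ lt] ->; rewrite size_take lt. Qed.

Lemma anc_cat (v u : addr) : v \in ancestors u -> exists a, u = v ++ a.
Proof. by move/mapP => [i _ ->]; exists (drop i u); rewrite cat_take_drop. Qed.

Lemma anc_not_prefix (v u : addr) : v \in ancestors u -> prefix u v = false.
Proof. by move=> /anc_size H; apply/negP => /size_prefix; rewrite leqNgt H. Qed.

Variables (t : btree X R) (Pr : Q -> R) (Z : Q -> {set X}) (k : nat).
Hypotheses (Pr0 : forall q, 0 <= Pr q) (ct : costs_ge0 t).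

Lemma subtree_child u x c l r b : subtree t u = Some (BNode x c l r) ->
  subtree t (rcons u b) = Some (if b then r else l).
Proof. move=> H; rewrite -cats1 subtree_cat H /=; case: b {H}; [case: r|case: l] => //. Qed.

Lemma vars_anc u s v : subtree t u = Some s -> v \in ancestors u -> vars t u \subset vars t v.
Proof.
move=> Hu /anc_cat [a E]; move: Hu; rewrite E subtree_cat /vars.
case Ev: (subtree t v) => [sv|] //= H.
by rewrite subtree_cat Ev /= H; apply: subtree_tvars H.
Qed.

Definition ctx_ok (u : addr) (v : option addr) : bool :=
  if v is Some v' then v' \in ancestors u else true.
Definition bctx (q : Q) (v : option addr) : bool :=
  if v is Some v' then vars t v' \subset Z q else false.

Lemma bctx_sub u s v q : subtree t u = Some s -> ctx_ok u v -> bctx q v -> vars t u \subset Z q.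
Proof. case: v => [v'|] //= Hu Ha Hb; exact: subset_trans (vars_anc Hu Ha) Hb. Qed.

Fixpoint val (q : Q) (s : btree X R) (u : addr) (b : bool) (P : pred addr) : R :=
  match s with
  | BLeaf _ => ([&& P u, vars t u \subset Z q & ~~ b])%:R * Ctot t u
  | BNode _ _ l r =>
      ([&& P u, vars t u \subset Z q & ~~ b])%:R * Ctot t u
      + val q l (rcons u false) (b || (P u && (vars t u \subset Z q))) P
      + val q r (rcons u true) (b || (P u && (vars t u \subset Z q))) P
  end.

Lemma val_true q s u P : val q s u true P = 0.
Proof. by elim: s u => [c|x c l IHl r IHr] u /=; rewrite ?andbF ?mul0r ?IHl ?IHr ?addr0. Qed.

Lemma val_congr q s u b (P P' : pred addr) : (forall w, prefix u w -> P w = P' w) ->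
  val q s u b P = val q s u b P'.
Proof.
elim: s u b => [c|x c l IHl r IHr] u b H /=; rewrite H ?prefix_refl //.
rewrite (IHl _ _ (fun w Hw => H w (prefix_rcons_prefix Hw))).
by rewrite (IHr _ _ (fun w Hw => H w (prefix_rcons_prefix Hw))).
Qed.

Lemma val_nil q s u b (P : pred addr) : (forall w, prefix u w -> P w = false) -> val q s u b P = 0.
Proof.
elim: s u b => [c|x c l IHl r IHr] u b H /=; rewrite H ?prefix_refl /= ?mul0r ?add0r //.
rewrite (IHl _ _ (fun w Hw => H w (prefix_rcons_prefix Hw))).
by rewrite (IHr _ _ (fun w Hw => H w (prefix_rcons_prefix Hw))) addr0.
Qed.

Lemma val_le q s u b P : subtree t u = Some s -> val q s u b P <= Ctot t u.
Proof.
move=> Hu; have cs := subtree_costs ct Hu; elim: s u b Hu cs => [c|x c l IHl r IHr] u b Hu /=.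
  by rewrite /Ctot Hu /= => c0; case: (_ && _); rewrite ?mul1r ?mul0r.
case/and3P => c0 cl cr.
case E: [&& P u, vars t u \subset Z q & ~~ b].
  move: E => /and3P[-> -> _]; rewrite orbT !val_true mul1r !addr0 //.
rewrite mul0r add0r.
have Hl := subtree_child false Hu; have Hr := subtree_child true Hu.
apply: le_trans (lerD (IHl _ _ Hl cl) (IHr _ _ Hr cr)) _.
by rewrite /Ctot Hl Hr Hu /= -addrA lerDr.
Qed.

Definition blk (q : Q) (Rs : seq addr) (w : addr) : bool :=
  has (fun x => (x \in ancestors w) && (vars t x \subset Z q)) Rs.

Lemma blk_rcons q Rs u b :
  blk q Rs (rcons u b) = blk q Rs u || ((u \in Rs) && (vars t u \subset Z q)).
Proof.
rewrite /blk anc_rcons.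
apply/hasP/orP => [[x xR /andP[]]|[/hasP[x xR /andP[xa V]]|/andP[uR V]]].
- rewrite mem_rcons in_cons => /orP[/eqP E V|xa V]; first by right; rewrite -E xR V.
  by left; apply/hasP; exists x => //; rewrite xa V.
- by exists x => //; rewrite mem_rcons in_cons xa orbT V.
- by exists u => //; rewrite mem_rcons in_cons eqxx V.
Qed.

Lemma sum_split (g : addr -> R) (Rs : seq addr) u :
  \sum_(w <- Rs | prefix u w) g w = \sum_(w <- Rs | w == u) g w
    + \sum_(w <- Rs | prefix (rcons u false) w) g w + \sum_(w <- Rs | prefix (rcons u true) w) g w.
Proof.
elim: Rs => [|w Rs IH]; first by rewrite !big_nil !addr0.
rewrite !big_cons IH.
case Hp: (prefix u w).
  have := prefix_tri Hp.
  by case: (w == u); case: (prefix (rcons u false) w); case: (prefix (rcons u true) w) => //= _; lra.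
have -> : (w == u) = false by apply/negP => /eqP E; rewrite E prefix_refl in Hp.
have -> : prefix (rcons u false) w = false by apply/negP => /prefix_rcons_prefix; rewrite Hp.
by have -> : prefix (rcons u true) w = false by apply/negP => /prefix_rcons_prefix; rewrite Hp.
Qed.

Lemma sum_pred1 (g : addr -> R) (Rs : seq addr) u : uniq Rs ->
  \sum_(w <- Rs | w == u) g w = (u \in Rs)%:R * g u.
Proof.
move=> uR; case: (boolP (u \in Rs)) => uin.
  rewrite -big_filter.
  have -> : [seq w <- Rs | w == u] = [:: u] by apply: filter_pred1_uniq.
  by rewrite big_seq1 mul1r.
rewrite mul0r big1_seq // => w /andP[/eqP -> ]; by rewrite (negbTE uin).
Qed.

Lemma sum_val (q : Q) (Rs : seq addr) : uniq Rs -> forall s u, subtree t u = Some s ->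
  (forall w, w \in Rs -> prefix u w -> isSome (subtree t w)) ->
  \sum_(w <- Rs | prefix u w) (Iq t Z q w Rs)%:R * Ctot t w
    = val q s u (blk q Rs u) (fun w => w \in Rs).
Proof.
move=> uR; elim=> [c|x c l IHl r IHr] u Hu Hv; rewrite sum_split sum_pred1 //.
- rewrite !big1_seq ?addr0.
  + by rewrite /Iq /=; case: (u \in Rs); rewrite ?mul1r ?mul0r.
  + move=> w /andP[Hp wR]; move: (Hv w wR (prefix_rcons_prefix Hp)).
    by move: Hp => /prefixP[a ->]; rewrite subtree_cat -cats1 subtree_cat Hu.
  + move=> w /andP[Hp wR]; move: (Hv w wR (prefix_rcons_prefix Hp)).
    by move: Hp => /prefixP[a ->]; rewrite subtree_cat -cats1 subtree_cat Hu.
rewrite /=.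
rewrite (IHl _ (subtree_child false Hu)); last by move=> w wR /prefix_rcons_prefix; apply: Hv.
rewrite (IHr _ (subtree_child true Hu)); last by move=> w wR /prefix_rcons_prefix; apply: Hv.
rewrite !blk_rcons; congr (_ + _ + _).
by rewrite /Iq; case: (u \in Rs); rewrite ?mul1r ?mul0r.
Qed.

Definition W (s : btree X R) (u : addr) (v : option addr) (S : seq addr) : R :=
  \sum_(q : Q) Pr q * val q s u (bctx q v) (fun w => w \in S).

Lemma benefit_W Rs : uniq Rs -> all (is_internal t) Rs -> benefit t Pr Z Rs = W t [::] None Rs.
Proof.
move=> uR aR; rewrite /benefit /W /EI.
under eq_bigr do rewrite mulr_suml.
rewrite exchange_big /=; apply: eq_bigr => q _.
have E := sum_val q uR (subtree_nil t).
rewrite (eq_bigl _ _ (fun w => prefix0s w)) in E.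
have B0 : blk q Rs [::] = false by rewrite /blk /=; elim: Rs {uR aR E}.
rewrite B0 in E.
rewrite -E; last first.
  move=> w wR _; move/allP: aR => /(_ w wR); rewrite /is_internal; by case: (subtree t w).
rewrite mulr_sumr; apply: eq_bigr => w _; by rewrite mulrA.
Qed.


Local Notation D := (Dt t Pr Z k).

Definition inside (u : addr) (S : seq addr) := all (fun w => prefix u w && is_internal t w) S.

Fixpoint addrs (s : btree X R) (u : addr) : seq addr :=
  match s with
  | BLeaf _ => [:: u]
  | BNode _ _ l r => u :: addrs l (rcons u false) ++ addrs r (rcons u true)
  end.

Lemma size_addrs s u : size (addrs s u) = bsize s.
Proof. by elim: s u => [c|x c l IHl r IHr] u //=; rewrite size_cat IHl IHr. Qed.

Lemma mem_addrs s u a : isSome (subtree s a) -> u ++ a \in addrs s u.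
Proof.
elim: s u a => [c|x c l IHl r IHr] u [|b a] //=; rewrite ?cats0 ?mem_head //.
move=> H; rewrite in_cons mem_cat -cat_rcons.
by case: b H => H; [rewrite (IHr _ _ H) !orbT | rewrite (IHl _ _ H) orbT].
Qed.

Lemma inside_size u s S : subtree t u = Some s -> uniq S -> inside u S -> (size S <= bsize s)%N.
Proof.
move=> Hu uS iS; rewrite -(size_addrs s u); apply: uniq_leq_size => // w wS.
move/allP: iS => /(_ w wS) /andP[/prefixP[a E] iw]; rewrite E.
apply: mem_addrs; move: iw; rewrite E /is_internal subtree_cat Hu /=.
by case: (subtree s a).
Qed.

Lemma inside_filter u S b : inside u S -> inside (rcons u b) [seq w <- S | prefix (rcons u b) w].
Proof.
move=> iS; apply/allP => w; rewrite mem_filter => /andP[p wS]; rewrite p.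
by move/allP: iS => /(_ w wS) /andP[_ ->].
Qed.

Lemma size_split u S : uniq S -> inside u S ->
  size S = ((u \in S) + size [seq w <- S | prefix (rcons u false) w]
            + size [seq w <- S | prefix (rcons u true) w])%N.
Proof.
move=> uS iS; rewrite -count_uniq_mem //.
elim: S {uS} iS => [|w S IH] //= /andP[/andP[Hw _] iS].
rewrite (IH iS); have := prefix_tri Hw.
by case: (w == u); case: (prefix (rcons u false) w); case: (prefix (rcons u true) w) => //= _; lia.
Qed.

Lemma Dt_leaf c u kap v :
  D (BLeaf c) u kap v = if (kap <= minn k 1)%N then Some 0 else None.
Proof. by []. Qed.

Lemma Dt_node x c l r u kap v :
  D (BNode x c l r) u kap v =
  if (kap <= minn k (bsize l + bsize r).+1)%N then
    omax (Dplus_of t Pr Z (D l (rcons u false)) (D r (rcons u true)) u v kap)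
         (Dminus_of (D l (rcons u false)) (D r (rcons u true)) v kap)
  else None.
Proof. by []. Qed.

Lemma Dt0 s u v : D s u 0 v = Some 0.
Proof.
elim: s u v => [c|x c l IHl r IHr] u v; rewrite ?Dt_leaf ?Dt_node //=.
by rewrite /Dminus_of /splitmax big_ord_recl big_ord0 /= IHl subnn IHr /= addr0.
Qed.

Lemma u_notin_anc (u : addr) : (u \in ancestors u) = false.
Proof. by apply/negP => /anc_size; rewrite ltnn. Qed.

Lemma Bpair_E u s v : subtree t u = Some s -> ctx_ok u v ->
  Bpair t Pr Z u v = \sum_(q : Q) Pr q * ((vars t u \subset Z q) && ~~ bctx q v)%:R * Ctot t u.
Proof.
move=> Hu Hc; rewrite /Bpair /pbenefit big_cons prefix_refl.
have -> : \sum_(w <- eps_set v | prefix u w) EI t Pr Z w (u :: eps_set v) * Ctot t w = 0.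
  by case: v Hc => [v'|] //= Hc; rewrite ?big_cons ?big_nil // anc_not_prefix.
rewrite addr0 /EI mulr_suml; apply: eq_bigr => q _.
congr (Pr q * _%:R * _).
rewrite /Iq mem_head /= u_notin_anc /=.
by case: v Hc => [v'|] //= ->; rewrite orbF.
Qed.

Lemma W_congr s u v S S' : (forall w, prefix u w -> (w \in S) = (w \in S')) ->
  W s u v S = W s u v S'.
Proof. by move=> H; apply: eq_bigr => q _; rewrite (val_congr _ _ _ H). Qed.

Lemma W_node_in u x c l r v S : subtree t u = Some (BNode x c l r) -> ctx_ok u v -> u \in S ->
  W (BNode x c l r) u v S
  = Bpair t Pr Z u v + W l (rcons u false) (Some u) S + W r (rcons u true) (Some u) S.
Proof.
move=> Hu Hc uS; rewrite (Bpair_E Hu Hc) /W -!big_split; apply: eq_bigr => q _ /=.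
rewrite uS /=.
have -> : bctx q v || (vars t u \subset Z q) = (vars t u \subset Z q).
  by case E: (bctx q v) => //=; rewrite (bctx_sub Hu Hc E).
by rewrite !mulrDr !mulrA.
Qed.

Lemma W_node_out u x c l r v S : u \notin S ->
  W (BNode x c l r) u v S = W l (rcons u false) v S + W r (rcons u true) v S.
Proof.
move=> uS; rewrite /W -!big_split; apply: eq_bigr => q _ /=.
by rewrite (negbTE uS) /= orbF mul0r add0r mulrDr.
Qed.

Lemma W_mono u x c l r v S : subtree t u = Some (BNode x c l r) -> u \notin S ->
  W (BNode x c l r) u v S <= W (BNode x c l r) u v (u :: S).
Proof.
move=> Hu uS; rewrite /W; apply: ler_sum => q _; apply: ler_wpM2l => //.
set b := bctx q v.
case E: ((vars t u \subset Z q) && ~~ b).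
  move: E => /andP[V nb].
  have L := val_le q b (fun w => w \in S) Hu; apply: le_trans L _.
  by rewrite /= mem_head V nb /= orbT !val_true mul1r !addr0.
have Hcong : forall b' (c' : bool),
    val q (if c' then r else l) (rcons u c') b' (fun w => w \in S)
    = val q (if c' then r else l) (rcons u c') b' (fun w => w \in u :: S).
  move=> b' c'; apply: val_congr => w Hw; by rewrite in_cons (prefix_rcons_neq Hw).
rewrite /= mem_head (negbTE uS) /= E orbF.
have -> : b || (vars t u \subset Z q) = b.
  by move: E; case: b; case: (vars t u \subset Z q).
by rewrite (Hcong b false) (Hcong b true).
Qed.


Lemma ctx_child_u u b : ctx_ok (rcons u b) (Some u).
Proof. by rewrite /= anc_rcons mem_rcons mem_head. Qed.

Lemma ctx_child_v u v b : ctx_ok u v -> ctx_ok (rcons u b) v.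
Proof. by case: v => //= v' H; rewrite anc_rcons mem_rcons in_cons H orbT. Qed.

Lemma is_internal_node u x c l r : subtree t u = Some (BNode x c l r) -> is_internal t u.
Proof. by rewrite /is_internal => ->. Qed.

Lemma arith1 (kk : nat) bl br kap' nl nr : (kap'.+1 <= minn kk (bl+br).+1)%N -> (1 + nl + nr <= kap'.+1)%N ->
  (nl <= bl)%N -> (nr <= br)%N ->
  [/\ (maxn nl (kap' - minn kk br) <= minn kk bl)%N, (kap' - maxn nl (kap' - minn kk br) <= minn kk br)%N,
      (maxn nl (kap' - minn kk br) <= kap')%N, (nl <= maxn nl (kap' - minn kk br))%N &
      (nr <= kap' - maxn nl (kap' - minn kk br))%N].
Proof. move=> *; split; lia. Qed.
Lemma arith2 (kk : nat) bl br kap nl nr : (kap <= minn kk (bl+br).+1)%N -> (nl + nr <= kap)%N ->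
  (nl <= bl)%N -> (nr <= br)%N -> (kap <= minn kk bl + minn kk br)%N ->
  [/\ (maxn nl (kap - minn kk br) <= minn kk bl)%N, (kap - maxn nl (kap - minn kk br) <= minn kk br)%N,
      (maxn nl (kap - minn kk br) <= kap)%N, (nl <= maxn nl (kap - minn kk br))%N &
      (nr <= kap - maxn nl (kap - minn kk br))%N].
Proof. move=> *; split; lia. Qed.
Lemma arith3 (kk : nat) bl br kap nl nr : (kap <= minn kk (bl+br).+1)%N ->
  (nl <= bl)%N -> (nr <= br)%N -> (minn kk bl + minn kk br < kap)%N -> ((nl + nr).+1 <= kap)%N.
Proof. move=> *; lia. Qed.

Lemma DP s : forall u v kap, subtree t u = Some s -> ctx_ok u v -> (kap <= minn k (bsize s))%N ->
  exists d, D s u kap v = Some d /\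
    (forall S, uniq S -> inside u S -> (size S <= kap)%N -> W s u v S <= d).
Proof.
elim: s => [c|x c l IHl r IHr] u v kap Hu Hc Hk.
  exists 0; rewrite Dt_leaf Hk; split => // S uS iS _.
  have uS' : u \notin S.
    by apply/negP => uin; move/allP: iS => /(_ u uin) /andP[_]; rewrite /is_internal Hu.
  by rewrite /W big1 // => q _ /=; rewrite (negbTE uS') mul0r mulr0.
have /= Hl := subtree_child false Hu; have /= Hr := subtree_child true Hu.
move: Hk => /= Hk.
have Split : forall S, uniq S -> inside u S ->
   [/\ size S = ((u \in S) + size [seq w <- S | prefix (rcons u false) w]
            + size [seq w <- S | prefix (rcons u true) w])%N,
       uniq [seq w <- S | prefix (rcons u false) w], uniq [seq w <- S | prefix (rcons u true) w],
       inside (rcons u false) [seq w <- S | prefix (rcons u false) w] &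
       inside (rcons u true) [seq w <- S | prefix (rcons u true) w]].
  move=> S uS iS.
  have iSl := inside_filter false iS; have iSr := inside_filter true iS.
  have uSl := filter_uniq (prefix (rcons u false)) uS.
  have uSr := filter_uniq (prefix (rcons u true)) uS.
  by split => //; exact: size_split.
have Cin : forall S, uniq S -> inside u S -> u \in S -> (size S <= kap)%N ->
    exists p, Dplus_of t Pr Z (D l (rcons u false)) (D r (rcons u true)) u v kap = Some p
              /\ W (BNode x c l r) u v S <= p.
  move=> S uS iS uin sz.
  have [Esz uSl uSr iSl iSr] := Split S uS iS.
  have szl := inside_size Hl uSl iSl; have szr := inside_size Hr uSr iSr.
  move: Esz uSl uSr iSl iSr szl szr sz.
  set Sl := [seq w <- S | prefix (rcons u false) w].
  set Sr := [seq w <- S | prefix (rcons u true) w].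
  rewrite uin => Esz uSl uSr iSl iSr szl szr sz.
  case: kap Hk sz => [|kap'] Hk sz; first by move: sz; rewrite Esz.
  rewrite Esz in sz.
  have [Hi1 Hi2 Hi3 Hi4 Hi5] := arith1 Hk sz szl szr.
  set i := maxn (size Sl) (kap' - minn k (bsize r)) in Hi1 Hi2 Hi3 Hi4 Hi5.
  have [dl [Edl Bl]] := IHl (rcons u false) (Some u) i Hl (ctx_child_u u false) Hi1.
  have [dr [Edr Br]] := IHr (rcons u true) (Some u) (kap' - i)%N Hr (ctx_child_u u true) Hi2.
  have := splitmax_ub (fun j => D l (rcons u false) j (Some u))
                      (fun j => D r (rcons u true) j (Some u)) Hi3.
  rewrite Edl Edr /=.
  case Es: (splitmax _ _ kap') => [e|] //= Hle.
  exists (Bpair t Pr Z u v + e); split => //.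
  rewrite (W_node_in Hu Hc uin).
  rewrite (@W_congr _ _ _ S Sl); last by move=> w Hw; rewrite mem_filter Hw.
  rewrite (@W_congr _ _ _ S Sr); last by move=> w Hw; rewrite mem_filter Hw.
  rewrite -addrA lerD2l; apply: le_trans Hle.
  by apply: lerD; [apply: Bl | apply: Br].
have [d Ed] : exists d, D (BNode x c l r) u kap v = Some d.
  case: kap Hk Cin => [|kap'] Hk Cin; first by exists 0; apply: Dt0.
  have iu : inside u [:: u] by rewrite /inside /= prefix_refl (is_internal_node Hu).
  have [p [Ep _]] := Cin [:: u] erefl iu (mem_head _ _) (ltn0Sn kap').
  by rewrite Dt_node Hk Ep; apply: omax_some_l.
exists d; split => // S uS iS sz.
have DE : omax (Dplus_of t Pr Z (D l (rcons u false)) (D r (rcons u true)) u v kap)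
               (Dminus_of (D l (rcons u false)) (D r (rcons u true)) v kap) = Some d.
  by rewrite -Ed Dt_node Hk.
have ubp := omax_ubl (Dplus_of t Pr Z (D l (rcons u false)) (D r (rcons u true)) u v kap)
               (Dminus_of (D l (rcons u false)) (D r (rcons u true)) v kap).
have ubm := omax_ubr (Dplus_of t Pr Z (D l (rcons u false)) (D r (rcons u true)) u v kap)
               (Dminus_of (D l (rcons u false)) (D r (rcons u true)) v kap).
rewrite DE in ubp ubm.
case: (boolP (u \in S)) => uin.
  have [p [Ep Wp]] := Cin S uS iS uin sz.
  by rewrite Ep in ubp; apply: le_trans Wp ubp.
have [Esz uSl uSr iSl iSr] := Split S uS iS.
have szl := inside_size Hl uSl iSl; have szr := inside_size Hr uSr iSr.
move: Esz uSl uSr iSl iSr szl szr sz.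
set Sl := [seq w <- S | prefix (rcons u false) w].
set Sr := [seq w <- S | prefix (rcons u true) w].
rewrite (negbTE uin) add0n => Esz uSl uSr iSl iSr szl szr sz.
rewrite Esz in sz.
case: (leqP kap (minn k (bsize l) + minn k (bsize r))) => Hsum.
  have [Hi1 Hi2 Hi3 Hi4 Hi5] := arith2 Hk sz szl szr Hsum.
  set i := maxn (size Sl) (kap - minn k (bsize r)) in Hi1 Hi2 Hi3 Hi4 Hi5.
  have [dl [Edl Bl]] := IHl (rcons u false) v i Hl (ctx_child_v false Hc) Hi1.
  have [dr [Edr Br]] := IHr (rcons u true) v (kap - i)%N Hr (ctx_child_v true Hc) Hi2.
  have := splitmax_ub (fun j => D l (rcons u false) j v)
                      (fun j => D r (rcons u true) j v) Hi3.
  rewrite Edl Edr /=.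
  have -> : splitmax (fun j => D l (rcons u false) j v) (fun j => D r (rcons u true) j v) kap
            = Dminus_of (D l (rcons u false)) (D r (rcons u true)) v kap by [].
  case Es: (Dminus_of _ _ v kap) ubm => [e|] //= ubm Hle.
  rewrite (W_node_out _ _ _ _ _ uin).
  rewrite (@W_congr _ _ _ S Sl); last by move=> w Hw; rewrite mem_filter Hw.
  rewrite (@W_congr _ _ _ S Sr); last by move=> w Hw; rewrite mem_filter Hw.
  apply: le_trans ubm; apply: le_trans Hle.
  by apply: lerD; [apply: Bl | apply: Br].
apply: le_trans (W_mono v Hu uin) _.
have [||||p [Ep Wp]] := Cin (u :: S).
- by rewrite /= uin uS.
- by rewrite /= prefix_refl (is_internal_node Hu) iS.
- exact: mem_head.
- by rewrite /= Esz; exact: arith3 Hk szl szr Hsum.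
by rewrite Ep in ubp; apply: le_trans Wp ubp.
Qed.


Lemma W_nil s u v : W s u v [::] = 0.
Proof. by rewrite /W big1 // => q _; rewrite val_nil ?mulr0. Qed.

Lemma inside_up u b S : inside (rcons u b) S -> inside u S.
Proof.
move=> iS; apply/allP => w wS; move/allP: iS => /(_ w wS) /andP[p ->].
by rewrite (prefix_rcons_prefix p).
Qed.

Lemma notin_other u b S w : inside (rcons u b) S -> prefix (rcons u (~~ b)) w -> (w \in S) = false.
Proof.
move=> iS Hw; apply/negP => wS; move/allP: iS => /(_ w wS) /andP[p _].
by case: b p Hw => p Hw; [apply: (prefix_lr Hw p) | apply: (prefix_lr p Hw)].
Qed.

Lemma notin_self u b S : inside (rcons u b) S -> (u \in S) = false.
Proof.
move=> iS; apply/negP => uS; move/allP: iS => /(_ u uS) /andP[p _].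
by move: (not_prefix_rcons u b); rewrite p.
Qed.

Lemma disj_lr u Sl Sr : inside (rcons u false) Sl -> inside (rcons u true) Sr ->
  uniq Sl -> uniq Sr -> uniq (Sl ++ Sr).
Proof.
move=> iSl iSr uSl uSr; rewrite cat_uniq uSl uSr andbT /=.
apply/hasP => [[w wSr wSl]].
move/allP: iSr => /(_ w wSr) /andP[p _].
by rewrite (notin_other (b:=false) iSl p) in wSl.
Qed.

Lemma omax_neq (a b : option R) d : omax a b = Some d -> omax a b <> a -> b = Some d.
Proof. by move=> E N; case: (omax_sel a b) => E'; [rewrite E' in N | rewrite -E' E]. Qed.

Lemma Cons_correct s u kap v S : Construct t Pr Z k s u kap v S ->
  subtree t u = Some s -> ctx_ok u v -> forall d, D s u kap v = Some d ->
  [/\ uniq S, inside u S, (size S <= kap)%N & W s u v S = d].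
Proof.
elim => {s u kap v S}.
- move=> c u kap v Hu Hc d; rewrite Dt_leaf; case: ifP => // _ [<-].
  by split => //; rewrite W_nil.
- move=> x c l r u v HD Hu Hc d; rewrite HD.
  rewrite /Dplus_of /splitmax big_ord_recl big_ord0 /= subnn !Dt0 /= => [[<-]].
  split => //; first by rewrite /inside /= prefix_refl (is_internal_node Hu).
  rewrite (W_node_in Hu Hc (mem_head _ _)).
  rewrite (@W_congr _ _ _ [:: u] [::]); last by move=> w Hw; rewrite in_cons (prefix_rcons_neq Hw).
  rewrite (@W_congr _ _ _ [:: u] [::]); last by move=> w Hw; rewrite in_cons (prefix_rcons_neq Hw).
  by rewrite !W_nil !addr0.
- move=> x c l r u kap v i Sl Sr H1 HD Hi Hsp CL IHl CR IHr Hu Hc d.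
  have Hl : subtree t (rcons u false) = Some l := subtree_child false Hu.
  have Hr : subtree t (rcons u true) = Some r := subtree_child true Hu.
  case: kap H1 HD Hi Hsp CL IHl CR IHr => [|kap'] // H1 HD Hi Hsp CL IHl CR IHr.
  rewrite /= in Hi Hsp.
    rewrite HD /Dplus_of -Hsp.
  case Edl: (D l (rcons u false) i (Some u)) => [dl|] //.
  case Edr: (D r (rcons u true) (kap' - i) (Some u)) => [dr|] //= [<-].
  have [uSl iSl szl WSl] := IHl Hl (ctx_child_u u false) dl Edl.
  have [uSr iSr szr WSr] := IHr Hr (ctx_child_u u true) dr Edr.
  split.
  + by rewrite /= mem_cat (notin_self iSl) (notin_self iSr) /= (disj_lr iSl iSr uSl uSr).
  + rewrite /= prefix_refl (is_internal_node Hu) /inside all_cat /=; apply/andP; split; [exact: inside_up iSl | exact: inside_up iSr].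
  + by rewrite /= size_cat; move: szl szr Hi; clear; lia.
  rewrite (W_node_in Hu Hc (mem_head _ _)).
  rewrite (@W_congr _ _ _ (u :: Sl ++ Sr) Sl); last first.
    by move=> w Hw; rewrite in_cons (prefix_rcons_neq Hw) mem_cat (notin_other (b:=true) iSr Hw) orbF.
  rewrite (@W_congr _ _ _ (u :: Sl ++ Sr) Sr); last first.
    by move=> w Hw; rewrite in_cons (prefix_rcons_neq Hw) mem_cat (notin_other (b:=false) iSl Hw).
  by rewrite WSl WSr addrA.
- move=> x c l r u kap v i Sl Sr Hneq Hi Hsp CL IHl CR IHr Hu Hc d.
  have Hl : subtree t (rcons u false) = Some l := subtree_child false Hu.
  have Hr : subtree t (rcons u true) = Some r := subtree_child true Hu.
  move=> Ed; move: Ed Hneq; rewrite Dt_node; case: ifP => // Hk Ed Hneq.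
  have := omax_neq Ed Hneq.
  rewrite /Dminus_of -Hsp.
  case Edl: (D l (rcons u false) i v) => [dl|] //.
  case Edr: (D r (rcons u true) (kap - i) v) => [dr|] //= [<-].
  have [uSl iSl szl WSl] := IHl Hl (ctx_child_v false Hc) dl Edl.
  have [uSr iSr szr WSr] := IHr Hr (ctx_child_v true Hc) dr Edr.
  have uin : u \notin Sl ++ Sr by rewrite mem_cat (notin_self iSl) (notin_self iSr).
  split.
  + exact: (disj_lr iSl iSr uSl uSr).
  + rewrite /inside all_cat; apply/andP; split; [exact: inside_up iSl | exact: inside_up iSr].
  + by rewrite size_cat; move: szl szr Hi; clear; lia.
  rewrite (W_node_out _ _ _ _ _ uin).
  rewrite (@W_congr _ _ _ (Sl ++ Sr) Sl); last first.
    by move=> w Hw; rewrite mem_cat (notin_other (b:=true) iSr Hw) orbF.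
  rewrite (@W_congr _ _ _ (Sl ++ Sr) Sr); last first.
    by move=> w Hw; rewrite mem_cat (notin_other (b:=false) iSl Hw).
  by rewrite WSl WSr.
Qed.

Lemma Cons_exists s u kap v : exists S, Construct t Pr Z k s u kap v S.
Proof.
elim: s u kap v => [c|x c l IHl r IHr] u kap v; first by exists [::]; constructor.
case: (D (BNode x c l r) u kap v =P
      Dplus_of t Pr Z (D l (rcons u false)) (D r (rcons u true)) u v kap) => E.
  case: kap E => [|[|n]] E.
  - by rewrite Dt0 in E.
  - by exists [:: u]; apply: CPlus1.
  have [i Hi Hs] := splitmax_arg (fun j => D l (rcons u false) j (Some u))
                                 (fun j => D r (rcons u true) j (Some u)) n.+1.
  have [Sl HSl] := IHl (rcons u false) i (Some u).
  have [Sr HSr] := IHr (rcons u true) (n.+1 - i)%N (Some u).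
  by exists (u :: Sl ++ Sr); apply: (CPlus (i:=i) _ E Hi Hs HSl HSr).
have [i Hi Hs] := splitmax_arg (fun j => D l (rcons u false) j v)
                               (fun j => D r (rcons u true) j v) kap.
have [Sl HSl] := IHl (rcons u false) i v.
have [Sr HSr] := IHr (rcons u true) (kap - i)%N v.
by exists (Sl ++ Sr); apply: (CMinus (i:=i) E Hi Hs HSl HSr).
Qed.

End Proof.


Theorem theorem1 (R : realFieldType) (X Q : finType) (t : btree X R)
    (Pr : Q -> R) (Z : Q -> {set X}) (k : nat) :
  (forall q, 0 <= Pr q) -> \sum_(q : Q) Pr q = 1 ->
  costs_ge0 t -> (0 < k)%N -> (k <= bsize t)%N ->
  (exists S, Construct t Pr Z k t [::] k None S) /\
  (forall S, Construct t Pr Z k t [::] k None S ->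
     [/\ feasible t k S,
         (forall Rs, feasible t k Rs -> benefit t Pr Z Rs <= benefit t Pr Z S) &
         Dt t Pr Z k t [::] k None = Some (benefit t Pr Z S)]).
Proof.
move=> Pr0 _ ct k0 kt; split; first exact: Cons_exists.
move=> S HS.
have Hk : (k <= minn k (bsize t))%N by rewrite leq_min leqnn kt.
have [d [Ed Hd]] := @DP R X Q t Pr Z k Pr0 ct t [::] None k (subtree_nil t) erefl Hk.
have [uS iS szS WS] := Cons_correct HS (subtree_nil t) erefl Ed.
have aS : all (is_internal t) S.
  by apply/allP => w wS; move/allP: iS => /(_ w wS) /andP[].
have bS : benefit t Pr Z S = d by rewrite (benefit_W Pr Z uS aS) WS.
split => //; last by rewrite Ed bS.
move=> Rs [uR aR szR]; rewrite (benefit_W Pr Z uR aR) bS; apply: Hd => //.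
by apply/allP => w wR; rewrite prefix0s; move/allP: aR => /(_ w wR).
Qed.
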